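(* Let $\Lambda=(\lambda_i)_{i=0}^\infty$ be a strictly increasing sequence of non-negative reals with $\lambda_0=0$, $\lambda_1\geq 1$ and $\sum_{i=1}^\infty 1/\lambda_i<\infty$, and let $M(\Lambda)=\overline{\operatorname{span}}\{t^{\lambda_i}: i\geq 0\}\subseteq C[0,1]$ with the sup-norm. Then $M(\Lambda)$ is not locally almost square.
   Context: $C[0,1]$ is the space of real-valued continuous functions on $[0,1]$ with the sup-norm. A Banach space $X$ with closed unit ball $B_X$ and unit sphere $S_X$ is locally almost square if for every $x\in S_X$ there exists a sequence $(y_n)$ in $B_X$ such that $\|y_n\|\to 1$ and $\|x\pm y_n\|\to 1$. *)

(* Defs.v *)
From HB Require Import structures.
From mathcomp Require Import all_boot all_order all_algebra.
From mathcomp Require Import all_classical all_reals all_analysis.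
Set Implicit Arguments. Unset Strict Implicit. Unset Printing Implicit Defensive.
Import Order.TTheory GRing.Theory Num.Theory.
Import numFieldNormedType.Exports.
Local Open Scope classical_set_scope.
Local Open Scope ring_scope.

(* An element of C[0,1] is represented by a function R -> R that is
   continuous on [0,1]; only its values on [0,1] matter. *)
Definition C01 {R : realType} (f : R -> R) : Prop :=
  {within `[0, 1]%classic, continuous f}.

Definition supnorm {R : realType} (f : R -> R) : R :=
  sup [set `|f t| | t in `[(0:R), 1]%classic].

Definition muntz_span {R : realType} (lam : nat -> R) : set (R -> R) :=
  [set g | exists (n : nat) (c : nat -> R),
      g = (fun t => \sum_(i < n) c i * powR t (lam i))].

Definition M_Lambda {R : realType} (lam : nat -> R) : set (R -> R) :=
  [set f | C01 f /\
     forall e : R, 0 < e -> exists2 g, muntz_span lam g & supnorm (f \- g) < e].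

Definition locally_almost_square {R : realType} (X : set (R -> R)) : Prop :=
  forall x, X x -> supnorm x = 1 ->
    exists y : nat -> (R -> R),
      (forall n, X (y n)) /\ (forall n, supnorm (y n) <= 1) /\
      (supnorm (y n) @[n --> \oo] --> (1:R)) /\
      (supnorm (x \+ y n) @[n --> \oo] --> (1:R)) /\
      (supnorm (x \- y n) @[n --> \oo] --> (1:R)).

(* Main.v *)
Require Import Defs.
From HB Require Import structures.
From mathcomp Require Import all_boot all_order all_algebra.
From mathcomp Require Import all_classical all_reals all_analysis.
From mathcomp Require Import lra.
Import Order.TTheory GRing.Theory Num.Theory.
Import numFieldNormedType.Exports.
Local Open Scope classical_set_scope.
Local Open Scope ring_scope.

Lemma L1 (R : realType) (f : R -> R) (B : R) (t : R) :
  (forall s, s \in `[(0:R), 1]%R -> `|f s| <= B) -> t \in `[(0:R), 1]%R ->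
  `|f t| <= supnorm f.
Proof.
move=> HB Ht; rewrite /supnorm; apply: sup_upper_bound; last by exists t.
split; first by exists `|f t|, t.
by exists B => z [s Hs <-]; apply: HB.
Qed.

Lemma L3 (R : realType) (f : R -> R) (a : R) :
  (forall s, s \in `[(0:R), 1]%R -> `|f s| <= a) -> supnorm f <= a.
Proof.
move=> Ha; rewrite leNgt; apply/negP => /sup_gt [].
  have I0 : (0:R) \in `[(0:R), 1]%R by rewrite in_itv /= lexx ler01.
  by exists `|f 0|, 0.
by move=> z [s Hs <-]; rewrite ltNge Ha.
Qed.

Lemma L2 (R : realType) (f : R -> R) : C01 f ->
  exists B, forall s, s \in `[(0:R), 1]%R -> `|f s| <= B.
Proof.
move=> Hf.
have [c1 _ H1] := EVT_min ler01 Hf.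
have [c2 _ H2] := EVT_max ler01 Hf.
exists (`|f c1| + `|f c2|) => s Hs.
have := H1 s Hs; have := H2 s Hs.
rewrite ler_norml => h2 h1; apply/andP.
have := ler_norm (f c2); have := ler_norm (- f c1); rewrite normrN => a b.
have := normr_ge0 (f c1); have := normr_ge0 (f c2).
split; lra.
Qed.

Theorem mainTheorem4 (R : realType) (lam : nat -> R) :
  (forall i j : nat, (i < j)%N -> lam i < lam j) ->
  (forall i : nat, 0 <= lam i) ->
  lam 0%N = 0 ->
  1 <= lam 1%N ->
  cvg (series (fun i : nat => (lam i.+1)^-1) @ \oo) ->
  ~ locally_almost_square (M_Lambda lam).
Proof.
move=> _ _ l0 _ _ H.
pose x : R -> R := fun _ => 1.
have I0 : (0:R) \in `[(0:R), 1]%R by rewrite in_itv /= lexx ler01.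
have Mx : M_Lambda lam x.
  split; first by move=> t; exact: cvg_cst.
  move=> e e0; exists x.
    exists 1%N, (fun _ => 1); apply: funext => t.
    by rewrite big_ord1 l0 powRr0 mul1r.
  apply: (le_lt_trans _ e0); apply: L3 => s _ /=.
  by rewrite /x subrr normr0.
have Sx : supnorm x = 1.
  apply/eqP; rewrite eq_le; apply/andP; split.
    by apply: L3 => s _; rewrite /x normr1.
  have := @L1 R x 1 0 (fun s _ => ltac:(by rewrite /x normr1)) I0.
  by rewrite /x normr1.
have [y [Hy [_ [Hsy [Hp Hm]]]]] := H x Mx Sx.
have E1 := cvgr_gt 1 Hsy (1/2) ltac:(lra).
have E2 := cvgr_lt 1 Hp (5/4) ltac:(lra).
have E3 := cvgr_lt 1 Hm (5/4) ltac:(lra).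
have [n [[h1 h2] h3]] := filter_ex (filterI (filterI E1 E2) E3).
have [B HB] := @L2 R (y n) (proj1 (Hy n)).
have [z [t Ht <-] zlt] := sup_gt (ex_intro _ `|y n 0| (ex_intro2 _ _ 0 I0 erefl)) h1.
have Bp : forall s, s \in `[(0:R), 1]%R -> `|(x \+ y n) s| <= 1 + B.
  move=> s Hs /=; apply: (le_trans (ler_normD _ _)); rewrite /x normr1 lerD2l; exact: HB.
have Bm : forall s, s \in `[(0:R), 1]%R -> `|(x \- y n) s| <= 1 + B.
  move=> s Hs /=; apply: (le_trans (ler_normB _ _)); rewrite /x normr1 lerD2l; exact: HB.
have P1 := @L1 R _ _ t Bp Ht; have P2 := @L1 R _ _ t Bm Ht.
have e1 : `|1 + y n t| < 5/4 by exact: (le_lt_trans P1 h2).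
have e2 : `|1 - y n t| < 5/4 by exact: (le_lt_trans P2 h3).
have f1 := ler_norm (1 + y n t); have f2 := ler_norm (1 - y n t).
move: zlt; case: (lerP 0 (y n t)) => hy.
  by rewrite (ger0_norm hy) => zlt; lra.
by rewrite (ltr0_norm hy) => zlt; lra.
Qed.
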